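(* Let $R$ be a connected reduced order with universal grading $(\Gamma,(R_\gamma)_{\gamma\in\Gamma})$ and degree map $d\colon\mu\to\Gamma$, where $\mu=\mu(R)$. Let $\varphi\colon U^*(d)\to\operatorname{Aut}(d)$ be the homomorphism $1+f\mapsto(\mathrm{id}_\mu+fd,\ \mathrm{id}_\Gamma+df)$, and let $\chi\colon\operatorname{Aut}(R)\to\operatorname{Aut}(d)$ send $\sigma$ to $(\sigma|_\mu,\sigma_\Gamma)$. Then the map $\psi\colon U^*(d)\to\operatorname{Aut}(R)$, sending $1+f$ to the additive map $R\to R$ given by $x\mapsto f(\gamma)\cdot x$ for $x\in R_\gamma$, $\gamma\in\Gamma$, is a well-defined group homomorphism, and $\chi\circ\psi=\varphi$.
   Context: All rings have a unit element. An order is a commutative ring whose additive group is isomorphic to $\mathbb{Z}^n$; it is reduced if it has no non-zero nilpotents and connected if it has exactly two idempotents. $\mu(R)$ is the (finite) group of roots of unity. A grading of $R$ is a pair $(\Delta,(R_\delta)_\delta)$ with $\Delta$ a multiplicatively written abelian group and $R_\delta$ additive subgroups with $R_\gamma R_\delta\subset R_{\gamma\delta}$ and $\bigoplus_\delta R_\delta\to R$ bijective; it is universal if every grading of $R$ is the pushforward $(E,(\sum_{\delta\in f^{-1}\epsilon}R_\delta)_\epsilon)$ along a unique homomorphism $f$ out of its group. Every reduced order has a universal grading with finite group; for connected reduced $R$ every $\zeta\in\mu(R)$ lies in a unique $R_\gamma$ and the degree map $d\colon\mu\to\Gamma$, $\zeta\mapsto\gamma$, is a homomorphism. Each $\sigma\in\operatorname{Aut}(R)$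 induces $\sigma_\Gamma\in\operatorname{Aut}(\Gamma)$ with $\sigma(R_\gamma)=R_{\sigma_\Gamma(\gamma)}$ for all $\gamma$, and $(\sigma|_\mu,\sigma_\Gamma)$ lies in $\operatorname{Aut}(d)$, the group of pairs $(\alpha,\beta)\in\operatorname{Aut}(\mu)\times\operatorname{Aut}(\Gamma)$ with $\beta d=d\alpha$. Hom groups are written additively: for $f\in\operatorname{Hom}(\Gamma,\mu)$, $\mathrm{id}_\mu+fd$ is the map $\zeta\mapsto\zeta\cdot f(d(\zeta))$ and $\mathrm{id}_\Gamma+df$ is $\gamma\mapsto\gamma\cdot d(f(\gamma))$. $Q(d)=\mathbb{Z}\oplus\operatorname{Hom}(\Gamma,\mu)$ is the ring with $(m,f)\star(n,g)=(mn,mg+nf+f\circ d\circ g)$; $U(d)=1+\operatorname{Hom}(\Gamma,\mu)$ and $U^*(d)=U(d)\cap Q(d)^*$, a group under $\star$. *)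

(* Defs.v *)
From HB Require Import structures.
From mathcomp Require Import all_boot all_order all_algebra.
Set Implicit Arguments. Unset Strict Implicit. Unset Printing Implicit Defensive.
Import Order.TTheory GRing.Theory Num.Theory.
Local Open Scope ring_scope.

Definition is_order (R : comNzRingType) : Prop :=
  exists (n : nat) (h : R -> 'rV[int]_n),
    (forall x y, h (x - y) = h x - h y) /\ bijective h.

Definition is_reduced (R : comNzRingType) : Prop :=
  forall (x : R) (n : nat), x ^+ n = 0 -> x = 0.

Definition is_connected (R : comNzRingType) : Prop :=
  exists e1 e2 : R, e1 <> e2 /\ forall e : R, e * e = e <-> (e = e1 \/ e = e2).

Definition is_root_of_unity (R : comNzRingType) (z : R) : Prop :=
  exists n : nat, (0 < n)%N /\ z ^+ n = 1.

(* Gradings.  Abelian groups Delta are written additively (zmodType);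
   R_delta are additive subgroups given as predicates. *)
Definition homog_fam (D : zmodType) (R : comNzRingType) (Rd : D -> R -> Prop)
  (c : D -> R) : Prop := forall e, Rd e (c e).

Definition fin_supported (D : zmodType) (R : comNzRingType) (c : D -> R) (s : seq D)
  : Prop := uniq s /\ forall e, e \notin s -> c e = 0.

Definition is_grading (D : zmodType) (R : comNzRingType) (Rd : D -> R -> Prop)
  : Prop :=
  [/\ forall e, Rd e 0,
      forall e x y, Rd e x -> Rd e y -> Rd e (x - y),
      forall a b x y, Rd a x -> Rd b y -> Rd (a + b) (x * y),
      forall x : R, exists (c : D -> R) (s : seq D),
          [/\ homog_fam Rd c, fin_supported c s & x = \sum_(e <- s) c e] &
      forall (c c' : D -> R) (s s' : seq D),
        homog_fam Rd c -> homog_fam Rd c' -> fin_supported c s -> fin_supported c' s' ->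
        \sum_(e <- s) c e = \sum_(e <- s') c' e -> forall e, c e = c' e].

Definition is_hom (A B : zmodType) (f : A -> B) : Prop :=
  forall a b, f (a + b) = f a + f b.

Definition pushforward (G : finZmodType) (D : zmodType) (R : comNzRingType)
  (Rg : G -> R -> Prop) (f : G -> D) (e : D) (x : R) : Prop :=
  exists c : G -> R, homog_fam Rg c /\ x = \sum_(g : G | f g == e) c g.

Definition universal_grading (G : finZmodType) (R : comNzRingType)
  (Rg : G -> R -> Prop) : Prop :=
  is_grading Rg /\
  forall (D : zmodType) (Rd : D -> R -> Prop), is_grading Rd ->
    exists f : G -> D,
      [/\ is_hom f,
          (forall e x, Rd e x <-> pushforward Rg f e x) &
          forall f' : G -> D, is_hom f' ->
            (forall e x, Rd e x <-> pushforward Rg f' e x) ->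
            forall g, f' g = f g].

(* Hom(Gamma, mu): group homomorphisms Gamma -> mu(R), Gamma additive,
   mu multiplicative. Addition in Hom is pointwise multiplication. *)
Definition hom_mu (G : zmodType) (R : comNzRingType) (f : G -> R) : Prop :=
  (forall a b, f (a + b) = f a * f b) /\ forall a, is_root_of_unity (f a).

(* Q(d) = Z (+) Hom(Gamma, mu), elements represented as pairs (m, f).
   (m,f) * (n,g) = (mn, m g + n f + f o d o g); in multiplicative values,
   (m g)(x) = g(m x), sums are pointwise products. *)
Definition qmul (G : zmodType) (R : comNzRingType) (d : R -> G)
  (x y : int * (G -> R)) : int * (G -> R) :=
  (x.1 * y.1, fun g => y.2 (g *~ x.1) * x.2 (g *~ y.1) * x.2 (d (y.2 g))).

Definition qone (G : zmodType) (R : comNzRingType) : int * (G -> R) :=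
  (1, fun _ => 1).

Definition qeq (G : zmodType) (R : comNzRingType) (x y : int * (G -> R)) : Prop :=
  x.1 = y.1 /\ forall g, x.2 g = y.2 g.

Definition in_Q (G : zmodType) (R : comNzRingType) (x : int * (G -> R)) : Prop :=
  hom_mu x.2.

(* 1 + f lies in U^*(d) = U(d) cap Q(d)^* *)
Definition U_star (G : zmodType) (R : comNzRingType) (d : R -> G) (f : G -> R)
  : Prop :=
  hom_mu f /\
  exists y : int * (G -> R), in_Q y /\
    qeq (qmul d (1%:Z, f) y) (qone G R) /\ qeq (qmul d y (1%:Z, f)) (qone G R).

Definition psi_spec (G : zmodType) (R : comNzRingType) (Rg : G -> R -> Prop)
  (f : G -> R) (s : R -> R) : Prop :=
  (forall x y, s (x + y) = s x + s y) /\ forall g x, Rg g x -> s x = f g * x.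

Definition ring_aut (R : comNzRingType) (s : R -> R) : Prop :=
  [/\ forall x y, s (x + y) = s x + s y,
      forall x y, s (x * y) = s x * s y,
      s 1 = 1 & bijective s].

(* Main.v *)
Require Import Defs.
From HB Require Import structures.
From mathcomp Require Import all_boot all_order all_algebra.
From Stdlib Require Import ClassicalEpsilon.
From mathcomp Require Import ring.
Import Order.TTheory GRing.Theory Num.Theory.
Local Open Scope ring_scope.
Set Implicit Arguments. Unset Strict Implicit.

Lemma grd_add (R : comNzRingType) (G : finZmodType) (Rg : G -> R -> Prop) :
  is_grading Rg -> forall e x y, Rg e x -> Rg e y -> Rg e (x + y).
Proof.
case=> H0 HB _ _ _ e x y hx hy.
have := HB e x (0 - y) hx (HB e 0 y (H0 e) hy). by rewrite sub0r opprK.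
Qed.

Lemma grd_uniq (R : comNzRingType) (G : finZmodType) (Rg : G -> R -> Prop)
  (c c' : G -> R) : is_grading Rg -> homog_fam Rg c -> homog_fam Rg c' ->
  \sum_e c e = \sum_e c' e -> forall e, c e = c' e.
Proof.
case=> _ _ _ _ HU hc hc' hs.
have fs : forall c0 : G -> R, fin_supported c0 (enum G).
  by move=> c0; split; [exact: enum_uniq | move=> e; rewrite mem_enum].
apply: (HU c c' (enum G) (enum G)) => //.
by rewrite !big_enum.
Qed.

Lemma grd_decomp (R : comNzRingType) (G : finZmodType) (Rg : G -> R -> Prop) :
  is_grading Rg -> forall x, exists c : G -> R, homog_fam Rg c /\ x = \sum_e c e.
Proof.
case=> _ _ _ HD _ x.
have [c [s [hc [us zs] ->]]] := HD x.
exists c; split => //.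
rewrite big_uniq // [RHS](bigID (fun e => e \in s)) /= [X in _ = _ + X]big1 ?addr0 //;
  try by move=> e /zs.
Qed.

Lemma ind_homog (R : comNzRingType) (G : finZmodType) (Rg : G -> R -> Prop) g x :
  is_grading Rg -> Rg g x -> homog_fam Rg (fun e => if e == g then x else 0).
Proof. case=> H0 _ _ _ _ hx e; case: eqP => [->|_] //. Qed.

Lemma ind_sum (R : comNzRingType) (G : finZmodType) (F : G -> R) g :
  \sum_e (if e == g then F e else 0) = F g.
Proof. by rewrite (bigD1 g) //= eqxx big1 ?addr0 // => e /negbTE ->. Qed.

Lemma grd_disj (R : comNzRingType) (G : finZmodType) (Rg : G -> R -> Prop) a b x :
  is_grading Rg -> Rg a x -> Rg b x -> a != b -> x = 0.
Proof.
move=> hG ha hb nab.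
have := grd_uniq hG (ind_homog hG ha) (ind_homog hG hb).
rewrite (ind_sum (fun _ => x) a) (ind_sum (fun _ => x) b) => /(_ erefl a).
by rewrite eqxx (negbTE nab).
Qed.

Lemma add_sum (R : comNzRingType) (G : finZmodType) (t : R -> R) (c : G -> R) :
  (forall x y, t (x + y) = t x + t y) -> t (\sum_e c e) = \sum_e t (c e).
Proof.
move=> H; apply: big_morph => //.
by apply: (addrI (t 0)); rewrite addr0 -H addr0.
Qed.

Lemma psi_ext (R : comNzRingType) (G : finZmodType) (Rg : G -> R -> Prop)
  (t1 t2 : R -> R) : is_grading Rg ->
  (forall x y, t1 (x + y) = t1 x + t1 y) -> (forall x y, t2 (x + y) = t2 x + t2 y) ->
  (forall g x, Rg g x -> t1 x = t2 x) -> forall x, t1 x = t2 x.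
Proof.
move=> hG h1 h2 he x.
have [c [hc ->]] := grd_decomp hG x.
rewrite !add_sum //; apply: eq_bigr => e _; exact: he (hc e).
Qed.

Lemma psi_exists (R : comNzRingType) (G : finZmodType) (Rg : G -> R -> Prop)
  (f : G -> R) : is_grading Rg -> exists s, psi_spec Rg f s.
Proof.
move=> hG.
pose comp x := proj1_sig (constructive_indefinite_description _ (grd_decomp hG x)).
have hcomp x : homog_fam Rg (comp x) /\ x = \sum_e comp x e.
  exact: proj2_sig (constructive_indefinite_description _ (grd_decomp hG x)).
exists (fun x => \sum_e f e * comp x e); split.
  move=> x y; rewrite -big_split /=; apply: eq_bigr => e _.
  have := grd_uniq hG (c := comp (x + y)) (c' := fun e => comp x e + comp y e).
  move=> -> //; first by rewrite mulrDr.
  - by case: (hcomp (x + y)).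
  - by move=> e'; apply: (grd_add hG); [case: (hcomp x) | case: (hcomp y)].
  - by rewrite big_split /= -(proj2 (hcomp x)) -(proj2 (hcomp y)) -(proj2 (hcomp (x + y))).
move=> g x hx.
have H := grd_uniq hG (proj1 (hcomp x)) (ind_homog hG hx).
rewrite (eq_bigr (fun e => if e == g then f e * x else 0)).
  by rewrite ind_sum.
move=> e _; rewrite H; first by case: eqP => _; rewrite ?mulr0.
by rewrite ind_sum -(proj2 (hcomp x)).
Qed.

Unset Implicit Arguments. Set Strict Implicit.

Theorem lemma6p5 (R : comNzRingType) (G : finZmodType)
  (Rg : G -> R -> Prop) (d : R -> G) :
  is_order R -> is_reduced R -> is_connected R -> universal_grading Rg ->
  (forall z : R, is_root_of_unity z -> Rg (d z) z) ->
  [/\ (* psi is well defined: the additive map exists and is unique *)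
      (forall f : G -> R, U_star d f ->
         exists s : R -> R, psi_spec Rg f s /\
           forall t : R -> R, psi_spec Rg f t -> forall x, t x = s x),
      (* psi(1+f) lies in Aut(R) *)
      (forall (f : G -> R) (s : R -> R), U_star d f -> psi_spec Rg f s ->
         ring_aut s),
      (* psi is a group homomorphism U^*(d) -> Aut(R) *)
      (forall (f h : G -> R) (sf sh sfh : R -> R),
         U_star d f -> U_star d h -> psi_spec Rg f sf -> psi_spec Rg h sh ->
         psi_spec Rg (qmul d (1%:Z, f) (1%:Z, h)).2 sfh ->
         forall x, sfh x = sf (sh x)) &
      (* chi o psi = phi *)
      (forall (f : G -> R) (s : R -> R), U_star d f -> psi_spec Rg f s ->
         (forall z : R, is_root_of_unity z -> s z = z * f (d z)) /\
         (forall (g : G) (y : R), Rg (g + d (f g)) y <-> exists x, Rg g x /\ s x = y))].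
Proof.
move=> _ _ _ [hG _] hd.
have hGc := hG; case: hGc => H0 HB HM _ _.
have one_ne0 : (1 : R) <> 0 by apply/eqP; exact: oner_neq0.
have ru1 : is_root_of_unity (1 : R) by exists 1%N; rewrite expr1.
have d1 : d 1 = 0.
  have h1 := hd _ ru1; have h2 := HM _ _ _ _ h1 h1; rewrite mulr1 in h2.
  case: (eqVneq (d 1 + d 1) (d 1)) => [e|ne].
    by apply: (addrI (d 1)); rewrite addr0.
  by case: one_ne0; exact: grd_disj hG h2 h1 ne.
have R0_1 : Rg 0 1 by rewrite -d1; exact: hd.
have rinv : forall z : R, is_root_of_unity z ->
    exists u, [/\ is_root_of_unity u, z * u = 1 & d z + d u = 0].
  move=> z [n [n0 zn]].
  exists (z ^+ n.-1).
  have zu : z * z ^+ n.-1 = 1 by rewrite -exprS prednK.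
  split => //.
    exists n; split => //; by rewrite -exprM mulnC exprM zn expr1n.
  have hz := hd _ (ex_intro _ n (conj n0 zn)).
  have hu : Rg (d (z ^+ n.-1)) (z ^+ n.-1).
    apply: hd; exists n; split => //; by rewrite -exprM mulnC exprM zn expr1n.
  have := HM _ _ _ _ hz hu; rewrite zu => h.
  case: (eqVneq (d z + d (z ^+ n.-1)) 0) => // ne.
  by case: one_ne0; exact: grd_disj hG h R0_1 ne.
have hmul : forall (f : G -> R) (s : R -> R), hom_mu f -> psi_spec Rg f s ->
    forall x y, s (x * y) = s x * s y.
  move=> f s [fh fr] [sa ss].
  have step1 : forall a x, Rg a x -> forall y, s (x * y) = s x * s y.
    move=> a x hx; apply: (psi_ext hG).
    - by move=> y z; rewrite mulrDr sa.
    - by move=> y z; rewrite sa mulrDr.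
    move=> b y hy; rewrite (ss _ _ (HM _ _ _ _ hx hy)) (ss _ _ hx) (ss _ _ hy) fh.
    by rewrite mulrACA.
  move=> x y; move: x; apply: (psi_ext hG).
  - by move=> x z; rewrite mulrDl sa.
  - by move=> x z; rewrite sa mulrDl.
  by move=> a x hx; exact: step1 hx y.
have hcomp : forall (f k : G -> R) (sf sk : R -> R), hom_mu f -> hom_mu k ->
    psi_spec Rg f sf -> psi_spec Rg k sk ->
    (forall g, k g * f g * f (d (k g)) = 1) -> forall x, sf (sk x) = x.
  move=> f k sf sk [fh _] [_ kr] [sfa sfs] [ska sks] hk.
  apply: (psi_ext hG) => //.
  - by move=> x y; rewrite ska sfa.
  move=> g x hx.
  have hkx : Rg (d (k g) + g) (k g * x) := HM _ _ _ _ (hd _ (kr g)) hx.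
  rewrite (sks _ _ hx) (sfs _ _ hkx).
  rewrite fh; transitivity (k g * f g * f (d (k g)) * x); first by ring.
  by rewrite hk mul1r.
have Uinv : forall f, U_star d f -> exists k, [/\ hom_mu k,
      (forall g, k g * f g * f (d (k g)) = 1) &
      (forall g, f g * k g * k (d (f g)) = 1)].
  move=> f [fh [[m k] [hk [[e1 e2] [e3 e4]]]]].
  rewrite /= mul1r in e1; subst m.
  exists k; split => // g.
have f0 : forall f : G -> R, hom_mu f -> f 0 = 1.
  move=> f [fh fr]; have [u [_ fu _]] := rinv _ (fr 0).
  transitivity (f 0 * (f 0 * u)); first by rewrite fu mulr1.
  by rewrite mulrA -fh addr0.
split.
- move=> f hf; have [s hs] := psi_exists f hG; exists s; split => // t ht.
  apply: (psi_ext hG); [exact: (proj1 ht) | exact: (proj1 hs) |].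
  by move=> g x hx; rewrite (proj2 ht _ _ hx) (proj2 hs _ _ hx).
- move=> f s hf hs; have [k [hk e1 e2]] := Uinv f hf.
  have [sk hsk] := psi_exists k hG.
  split.
  + exact: (proj1 hs).
  + exact: hmul (proj1 hf) hs.
  + by rewrite (proj2 hs _ _ R0_1) f0 ?mulr1 //; case: hf.
  + exists sk.
      by apply: (hcomp k f) => //; case: hf.
    by apply: (hcomp f k) => //; case: hf.
- move=> f h sf sh sfh [[fh _] _] [[hh hr] _] [sfa sfs] [sha shs] [sfha sfhs].
  apply: (psi_ext hG) => //.
    by move=> x y; rewrite sha sfa.
  move=> g x hx.
  have hhx : Rg (d (h g) + g) (h g * x) := HM _ _ _ _ (hd _ (hr g)) hx.
  rewrite (sfhs _ _ hx) (shs _ _ hx) (sfs _ _ hhx) /= !mulr1z fh; ring.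
- move=> f s [[fh fr] _] [sa ss]; split.
    by move=> z hz; rewrite (ss _ _ (hd _ hz)) mulrC.
  move=> g y; split.
    move=> hy; have [u [ur fu du]] := rinv _ (fr g).
    have hu : Rg g (u * y).
      have e : d u + (g + d (f g)) = g by rewrite addrCA (addrC (d u)) du addr0.
      by have := HM _ _ _ _ (hd _ ur) hy; rewrite e.
    exists (u * y); split => //.
    by rewrite (ss _ _ hu) mulrA fu mul1r.
  move=> [x [hx <-]]; rewrite (ss _ _ hx) addrC.
  exact: HM _ _ _ _ (hd _ (fr g)) hx.
Qed.
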